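(* For every finite set $I$ of positive integers, $d(I;0)=(-1)^{\#I}$, where $d(I;z)$ denotes the descent polynomial evaluated at $z=0$.
   Context: For a finite set $I$ of positive integers with $m=\max(I\cup\{0\})$, and $n>m$, $d(I;n)$ is the number of permutations $\pi\in\mathfrak S_n$ with descent set $\{i\mid\pi_i>\pi_{i+1}\}$ equal to $I$. This is a polynomial in $n$, and $d(I;z)$ denotes that polynomial evaluated at an arbitrary complex number $z$. *)

(* Defs.v *)
From HB Require Import structures.
From mathcomp Require Import all_boot all_order all_algebra all_fingroup.
Set Implicit Arguments. Unset Strict Implicit. Unset Printing Implicit Defensive.
Import GRing.Theory Num.Theory.

(* One-line notation of s : 'S_n as the sequence pi_1 ... pi_n
   (stored 0-based: entry j-1 of the list is pi_j, values in 0..n-1,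
   which does not affect comparisons). *)
Definition perm_word n (s : 'S_n) : seq nat := [seq val (s i) | i <- enum 'I_n].

Definition des_set n (s : 'S_n) : seq nat :=
  let w := perm_word s in
  [seq i <- iota 1 n.-1 | nth 0 w i.-1 > nth 0 w i].

(* A finite set I of positive integers is represented by the strictly
   increasing list of its elements. *)
Definition des_count (I : seq nat) (n : nat) : nat :=
  #|[pred s : 'S_n | des_set s == I]|.

Definition maxI (I : seq nat) : nat := \max_(i <- I) i.

(* Main.v *)
Require Import Defs.
From HB Require Import structures.
From mathcomp Require Import all_boot all_order all_algebra all_fingroup.
Set Implicit Arguments. Unset Strict Implicit. Unset Printing Implicit Defensive.


Definition desw (w : seq nat) : seq nat :=
  [seq i <- iota 1 (size w).-1 | nth 0 w i.-1 > nth 0 w i].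

Lemma size_perm_word n (s : 'S_n) : size (perm_word s) = n.
Proof. by rewrite /perm_word size_map size_enum_ord. Qed.

Lemma des_setE n (s : 'S_n) : des_set s = desw (perm_word s).
Proof. by rewrite /des_set /desw size_perm_word. Qed.

Lemma nth_perm_word n (s : 'S_n) (j : 'I_n) : nth 0 (perm_word s) j = val (s j).
Proof.
rewrite /perm_word.
rewrite (nth_map j); last by rewrite size_enum_ord.
by rewrite nth_ord_enum.
Qed.

Lemma perm_word_inj n : injective (@perm_word n).
Proof.
move=> s t H; apply/permP => i; apply: val_inj.
by rewrite -!nth_perm_word H.
Qed.

Lemma perm_word_iota n (s : 'S_n) : perm_eq (perm_word s) (iota 0 n).
Proof.
rewrite /perm_word -val_enum_ord (map_comp val s).
apply: perm_map; apply: uniq_perm.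
- by rewrite map_inj_uniq ?enum_uniq //; apply: perm_inj.
- exact: enum_uniq.
move=> x; rewrite mem_enum inE; apply/mapP; exists ((s^-1)%g x).
  by rewrite mem_enum. by rewrite permKV.
Qed.

Lemma perm_word_surj n (w : seq nat) : perm_eq w (iota 0 n) ->
  exists s : 'S_n, perm_word s = w.
Proof.
move=> pw.
have sw : size w = n by rewrite (perm_size pw) size_iota.
have lt i : i < n -> nth 0 w i < n.
  move=> hi; have : nth 0 w i \in iota 0 n by rewrite -(perm_mem pw) mem_nth // sw.
  by rewrite mem_iota.
pose f (i : 'I_n) : 'I_n := insubd i (nth 0 w i).
have finj : injective f.
  move=> i j /(congr1 val); rewrite /f !val_insubd !lt ?ltn_ord // => /eqP.
  rewrite nth_uniq ?sw ?ltn_ord ?(perm_uniq pw) ?iota_uniq //.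
  by move/eqP/val_inj.
exists (perm finj); apply: (@eq_from_nth _ 0); first by rewrite size_perm_word sw.
move=> i; rewrite size_perm_word => hi.
rewrite (nth_perm_word _ (Ordinal hi)) permE /f val_insubd /=.
by rewrite lt.
Qed.

Lemma des_countE I n :
  des_count I n = count (fun w => desw w == I) (permutations (iota 0 n)).
Proof.
rewrite /des_count cardE /enum_mem size_filter -enumT.
transitivity (count (fun w => desw w == I) (map (@perm_word n) (enum 'S_n))).
  by rewrite count_map; apply: eq_count => s; rewrite /preim /= inE /des_set /desw size_perm_word.
suff /seq.permP -> : perm_eq (map (@perm_word n) (enum 'S_n)) (permutations (iota 0 n)) by [].
apply: uniq_perm.
- rewrite map_inj_uniq; [exact: enum_uniq | exact: perm_word_inj].
- exact: permutations_uniq.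
move=> w; rewrite mem_permutations; apply/mapP/idP => [[s _ ->]|].
  exact: perm_word_iota.
by move/perm_word_surj => [s <-]; exists s; rewrite // mem_enum.
Qed.


Lemma desw_sorted w : sorted ltn (desw w).
Proof. apply: sorted_filter; [exact: ltn_trans | exact: iota_ltn_sorted]. Qed.

Lemma mem_desw w i :
  (i \in desw w) = (0 < i < size w) && (nth 0 w i.-1 > nth 0 w i).
Proof.
rewrite /desw mem_filter mem_iota andbC; congr (_ && _).
case: (size w) => [|k] //=; by case: i.
Qed.

Lemma mem_desw_take m w i : m <= size w ->
  (i \in desw (take m w)) = (0 < i < m) && (nth 0 w i.-1 > nth 0 w i).
Proof.
move=> hm; rewrite mem_desw size_takel //.
case: i => [|i] //=; case: (ltnP i.+1 m) => h //=.
by rewrite !nth_take // ltnW.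
Qed.

Lemma mem_desw_drop m w i :
  (i \in desw (drop m w)) =
  (0 < i < size w - m) && (nth 0 w (m + i.-1) > nth 0 w (m + i)).
Proof. by rewrite mem_desw size_drop !nth_drop. Qed.

Lemma sorted_rcons_lt (J : seq nat) m : sorted ltn (rcons J m) -> all (fun x => x < m) J.
Proof.
rewrite -rev_sorted rev_rcons /= => /(@order_path_min _ (fun x z : nat => z < x) m (rev J) (fun a b c h1 h2 => ltn_trans h2 h1)).
by rewrite all_rev.
Qed.

Lemma desw_split (J : seq nat) m w :
  sorted ltn (rcons J m) -> all (fun i => 0 < i) J -> 0 < m < size w ->
  ((desw w == rcons J m) || (desw w == J)) =
  (desw (take m w) == J) && (desw (drop m w) == [::]).
Proof.
move=> sJm Jpos /andP[m0 mw].
have sJ : sorted ltn J.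
  by apply: (subseq_sorted ltn_trans _ sJm); rewrite -cats1 prefix_subseq.
have Jlt := sorted_rcons_lt sJm.
have hJ i : i \in J -> 0 < i < m.
  move=> iJ; rewrite (allP Jpos i iJ) /=; exact: (allP Jlt i iJ).
have Ht i : (i \in desw (take m w)) = (i < m) && (i \in desw w).
  rewrite mem_desw_take; last exact: ltnW.
  rewrite mem_desw; case: i => [|k] /=; first by rewrite andbF.
  by case h: (k.+1 < m) => //=; rewrite (ltn_trans h mw).
have Hd i : (i \in desw (drop m w)) = (0 < i) && (m + i \in desw w).
  rewrite mem_desw_drop mem_desw; case: i => [|k] /=; first by [].
  by rewrite ltn_subRL addnS /=.
have srt := irr_sorted_eq ltn_trans ltnn.
have notJ i : m <= i -> (i \in J) = false.
  by move=> h; apply/negP => /hJ /andP[_]; rewrite ltnNge h.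
apply/idP/idP.
  case/orP => /eqP E; apply/andP; split; apply/eqP; apply: srt;
    rewrite ?desw_sorted ?sJ // => i; rewrite ?Ht ?Hd E ?mem_rcons ?in_cons.
  - case: (ltngtP i m) => h /=; [by [] | by rewrite notJ // (ltnW h) | by rewrite h notJ].
  - case: i => [|i] //=; rewrite notJ ?leq_addr // orbF.
    by rewrite -{2}(addn0 m) eqn_add2l.
  - case: (boolP (i \in J)) => h; last by rewrite andbF.
    by rewrite andbT; case/andP: (hJ i h).
  - by case: i => [|i] //=; rewrite notJ ?leq_addr.
case/andP => /eqP Et /eqP Ed.
have gen i : i != m -> (i \in desw w) = (i \in J).
  move=> nim; case: (ltngtP i m) => h; last by rewrite h eqxx in nim.
    by have := Ht i; rewrite Et h.
  have := Hd (i - m); rewrite Ed subnKC ?(ltnW h) // subn_gt0 h /= => <-.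
  by rewrite notJ // (ltnW h).
case: (boolP (m \in desw w)) => bm; apply/orP; [left|right]; apply/eqP;
  apply: srt => //; try exact: desw_sorted.
- move=> i; rewrite mem_rcons in_cons.
  case: (eqVneq i m) => [->|nim]; first by rewrite bm ?eqxx.
  by rewrite gen //; case: eqP nim => //= -> ; rewrite eqxx.
- move=> i; case: (eqVneq i m) => [->|nim]; last by rewrite gen.
  by rewrite (negbTE bm) notJ.
Qed.


Lemma mono_nth (a : seq nat) x y : sorted ltn a -> x < size a -> y < size a ->
  (nth 0 a x < nth 0 a y) = (x < y).
Proof.
move=> sa hx hy; have H := sorted_ltn_nth ltn_trans 0 sa.
case: (ltngtP x y) => h.
- exact: H.
- apply/negbTE; rewrite -leqNgt ltnW //; exact: H.
- by rewrite h ltnn.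
Qed.

Lemma desw_map (a t : seq nat) : sorted ltn a -> all (fun x => x < size a) t ->
  desw (map (nth 0 a) t) = desw t.
Proof.
move=> sa ht; rewrite /desw size_map; apply: eq_in_filter => i.
rewrite mem_iota => /andP[i1 i2].
have hi : i < size t.
  move: i2; case: (size t) => [|k] /=; last by rewrite add1n.
  by rewrite ltnS leqn0 => /eqP h; rewrite h in i1.
have hi' : i.-1 < size t by apply: leq_ltn_trans hi; exact: leq_pred.
rewrite !(nth_map 0) //; apply: mono_nth => //; apply: (allP ht); exact: mem_nth.
Qed.

Lemma map_index_iota (a : seq nat) : uniq a -> map (index^~ a) a = iota 0 (size a).
Proof.
move=> ua; apply: (@eq_from_nth _ 0); rewrite ?size_map ?size_iota // => i hi.
by rewrite (nth_map 0) // index_uniq // nth_iota.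
Qed.

Lemma relabel (J : seq nat) a : sorted ltn a ->
  count (fun u => desw u == J) (permutations a) =
  count (fun u => desw u == J) (permutations (iota 0 (size a))).
Proof.
move=> sa; have ua : uniq a := sorted_uniq ltn_trans ltnn sa.
set P := permutations (iota 0 (size a)).
have allP' t : t \in P -> all (fun x => x < size a) t.
  rewrite mem_permutations => /perm_mem pt; apply/allP => x.
  by rewrite pt mem_iota.
have inj : {in P &, injective (map (nth 0 a))}.
  move=> t t' ht ht' E.
  have K s : s \in P -> map (index^~ a) (map (nth 0 a) s) = s.
    move=> hs; rewrite -map_comp -[RHS]map_id; apply/eq_in_map => x hx /=.
    by rewrite index_uniq //; apply: (allP (allP' _ hs)).
  by rewrite -(K _ ht) E K.
have pe : perm_eq (permutations a) (map (map (nth 0 a)) P).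
  apply: uniq_perm; first exact: permutations_uniq.
    by rewrite map_inj_in_uniq //; exact: permutations_uniq.
  move=> w; rewrite mem_permutations; apply/idP/mapP.
    move=> pw; exists (map (index^~ a) w).
      rewrite mem_permutations -(map_index_iota ua); exact: perm_map.
    rewrite -map_comp -[LHS]map_id; apply/eq_in_map => x hx /=.
    by rewrite nth_index // -(perm_mem pw).
  case=> t ht ->; rewrite -{2}(mkseq_nth 0 a); apply: perm_map.
  by move: ht; rewrite mem_permutations.
move/seq.permP: pe => ->; rewrite count_map; apply: eq_in_count => t ht.
by rewrite /preim /= desw_map // allP'.
Qed.


Fixpoint subs (l : seq nat) (k : nat) : seq (seq nat) :=
  match l with
  | [::] => if k is 0 then [:: [::]] else [::]
  | x :: l' => if k is k'.+1 then map (cons x) (subs l' k') ++ subs l' k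
               else [:: [::]]
  end.

Lemma size_subs l k : size (subs l k) = 'C(size l, k).
Proof.
elim: l k => [|x l IH] [|k] //=.
by rewrite size_cat size_map !IH binS addnC.
Qed.

Lemma mem_subs l k s : s \in subs l k -> subseq s l /\ size s = k.
Proof.
elim: l k s => [|x l IH] [|k] s //=; rewrite ?inE.
- by move/eqP->.
- move/eqP->; split=> //; exact: sub0seq.
rewrite mem_cat => /orP[/mapP[t /IH [h1 h2] ->]|/IH [h1 h2]].
  by rewrite /= eqxx h1 h2.
have H : subseq s (x :: l) := subseq_trans h1 (subseq_cons l x).
by split...
Qed.

Lemma subs_mem l s : subseq s l -> s \in subs l (size s).
Proof.
elim: l s => [|x l IH] [|y s] //=.
case: eqP => [->|_] h; rewrite mem_cat.
  by rewrite map_f // IH.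
by have := IH (y :: s) h; move=> ->; rewrite orbT.
Qed.

Lemma subs_uniq l k : uniq l -> uniq (subs l k).
Proof.
elim: l k => [|x l IH] [|k] //= /andP[xl ul].
rewrite cat_uniq map_inj_uniq ?IH //; last by move=> a b [].
rewrite andbT; apply/hasPn => s /(mem_subs) [h1 _].
apply/mapP => -[t _ st]; move: h1; rewrite st => /mem_subseq/(_ x).
by rewrite mem_head => /(_ isT); apply/negP.
Qed.

Lemma desw_nil_sorted v : uniq v -> (desw v == [::]) = sorted ltn v.
Proof.
move=> uv; apply/idP/idP.
  move=> /eqP E; apply/(sortedP 0) => i hi.
  have : i.+1 \notin desw v by rewrite E.
  rewrite mem_desw hi /= -leqNgt leq_eqVlt => /orP[/eqP h|//].
  exfalso; move/eqP: h; rewrite nth_uniq ?(ltnW hi) //.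
  by rewrite ?(ltn_eqF (ltnSn i)) ?(gtn_eqF (ltnSn i)).
move=> sv; apply/eqP; apply: (irr_sorted_eq ltn_trans ltnn) => //; first exact: desw_sorted.
move=> i; rewrite mem_desw in_nil; case: i => [|i] //=.
apply/negbTE; rewrite negb_and -leqNgt; case: (ltnP i.+1 (size v)) => //= h.
rewrite -leqNgt; apply: ltnW; move/(sortedP 0): sv; exact.
Qed.


Lemma uniq_flatten_map (F : seq nat -> seq (seq nat)) s :
  uniq s -> {in s, forall a, uniq (F a)} ->
  {in s &, forall a a' y, y \in F a -> y \in F a' -> a = a'} ->
  uniq (flatten (map F s)).
Proof.
elim: s => //= a s IH /andP[nas us] UF D.
rewrite cat_uniq UF ?mem_head // IH //; first last.
- by move=> x y xs ys; apply: D; rewrite inE ?xs ?ys orbT.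
- by move=> x xs; apply: UF; rewrite inE xs orbT.
rewrite andbT; apply/hasPn => y /flattenP [t /mapP[a' a's ->] yt]; apply/negP => ya.
have E := D a a' (mem_head _ _) _ y ya yt.
by move: nas; rewrite E ?a's // inE a's orbT.
Qed.

Lemma sumn_const (G : nat) (s : seq (seq nat)) : sumn (map (fun _ => G) s) = size s * G.
Proof. by elim: s => //= x s ->; rewrite mulSn. Qed.

Lemma core n m J : m <= n ->
  count (fun w => (desw (take m w) == J) && (desw (drop m w) == [::]))
        (permutations (iota 0 n))
  = 'C(n, m) * count (fun u => desw u == J) (permutations (iota 0 m)).
Proof.
move=> mn.
set Q := fun w => _ && _.
set G := count _ (permutations (iota 0 m)).
set Subs := subs (iota 0 n) m.
pose F a := filter (fun u => desw u == J) (permutations a).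
pose U := flatten (map F Subs).
pose ext (u : seq nat) := u ++ [seq x <- iota 0 n | x \notin u].
have hS a : a \in Subs -> [/\ sorted ltn a, size a = m & {subset a <= iota 0 n}].
  case/mem_subs => h1 h2; split => //.
    exact: (subseq_sorted ltn_trans h1 (iota_ltn_sorted 0 n)).
  exact: mem_subseq.
have sizeU : size U = 'C(n, m) * G.
  rewrite size_flatten /shape -map_comp.
  have -> : map (size \o F) Subs = map (fun _ => G) Subs.
    apply/eq_in_map => a ha; case: (hS a ha) => h1 h2 _.
    by rewrite /= size_filter relabel // h2.
  by rewrite sumn_const size_subs size_iota.
have memU u : reflect (exists2 a, a \in Subs & perm_eq u a && (desw u == J)) (u \in U).
  apply: (iffP flattenP) => [[t /mapP[a ha ->]]|[a ha h]].
    by rewrite mem_filter mem_permutations andbC => h; exists a.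
  by exists (F a); [exact: map_f | rewrite mem_filter mem_permutations andbC].
have uU : uniq U.
  apply: uniq_flatten_map.
  - exact/subs_uniq/iota_uniq.
  - by move=> a _; apply/filter_uniq/permutations_uniq.
  move=> a a' ha ha' y; rewrite !mem_filter !mem_permutations.
  case/andP=> _ p1 /andP[_ p2].
  case: (hS a ha) => s1 _ _; case: (hS a' ha') => s2 _ _.
  apply: (irr_sorted_eq ltn_trans ltnn s1 s2).
  by move=> x; rewrite -(perm_mem p1) (perm_mem p2).
have sizeu u : u \in U -> size u = m.
  by case/memU => a ha /andP[p _]; case: (hS a ha) => _ h _; rewrite (perm_size p) h.
have pe : perm_eq (filter Q (permutations (iota 0 n))) (map ext U).
  apply: uniq_perm; first exact/filter_uniq/permutations_uniq.
    rewrite map_inj_in_uniq // => u u' hu hu' E.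
    have K v : v \in U -> take m (ext v) = v by move=> hv; rewrite /ext take_size_cat // sizeu.
    by rewrite -(K u hu) E K.
  move=> w; rewrite mem_filter mem_permutations; apply/idP/mapP.
    case/andP => /andP[/eqP Q1 Q2] pw.
    have sw : size w = n by rewrite (perm_size pw) size_iota.
    have uw : uniq w by rewrite (perm_uniq pw) iota_uniq.
    set u := take m w.
    have uu : uniq u := take_uniq m uw.
    set a := [seq x <- iota 0 n | x \in u].
    have pua : perm_eq u a.
      apply: uniq_perm => //; first exact/filter_uniq/iota_uniq.
      move=> x; rewrite mem_filter; case xu: (x \in u); rewrite ?andbF ?andbT //.
      by rewrite -(perm_mem pw) (mem_take xu).
    have aS : a \in Subs.
      have := subs_mem (filter_subseq (fun x => x \in u) (iota 0 n)).
      by rewrite -(perm_size pua) size_takel // sw.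
    exists u; first by apply/memU; exists a => //; rewrite pua Q1 eqxx.
    rewrite /ext -{1}(cat_take_drop m w); congr (_ ++ _).
    have uw' : uniq (u ++ drop m w) by rewrite cat_take_drop.
    apply: (irr_sorted_eq ltn_trans ltnn).
    - by rewrite -desw_nil_sorted ?Q2 // drop_uniq.
    - by apply: sorted_filter; [exact: ltn_trans | exact: iota_ltn_sorted].
    move=> x; rewrite mem_filter.
    move: uw'; rewrite cat_uniq => /and3P[_ /hasPn hd _].
    apply/idP/andP => [xd|[xnu xi]].
      split; first exact: hd.
      by rewrite -(perm_mem pw) (mem_drop xd).
    move: xi; rewrite -(perm_mem pw) -{1}(cat_take_drop m w) mem_cat.
    by rewrite (negbTE xnu).
  case=> u hu ->.
  case/memU: hu => a ha /andP[pua Ju].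
  case: (hS a ha) => _ sa ai.
  have su : size u = m by rewrite (perm_size pua).
  have uu : uniq u.
    rewrite (perm_uniq pua); apply: (subseq_uniq (proj1 (mem_subs ha))).
    exact: iota_uniq.
  have ui : {subset u <= iota 0 n} by move=> x; rewrite (perm_mem pua); exact: ai.
  have sf : sorted ltn [seq x <- iota 0 n | x \notin u].
    by apply: sorted_filter; [exact: ltn_trans | exact: iota_ltn_sorted].
  rewrite /Q /ext take_size_cat // drop_size_cat // Ju /=.
  rewrite desw_nil_sorted ?sf /=; last exact/filter_uniq/iota_uniq.
  apply: uniq_perm; last first.
    move=> x; rewrite mem_cat mem_filter.
    by case xu: (x \in u) => //=; rewrite ui.
  - exact: iota_uniq.
  rewrite cat_uniq uu filter_uniq ?iota_uniq // andbT.
  by apply/hasPn => x; rewrite mem_filter => /andP[].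
by rewrite -size_filter (perm_size pe) size_map sizeU.
Qed.

Import GRing.Theory Num.Theory.
Local Open Scope ring_scope.

Definition bp (m : nat) : {poly rat} := \prod_(i < m) ('X - (i%:R)%:P).

Lemma bp_eval n m : (m <= n)%N -> (bp m).[n%:R] = (n ^_ m)%:R.
Proof.
elim: m => [|m IH] hm; first by rewrite /bp big_ord0 hornerC ffactn0.
rewrite /bp big_ord_recr /= hornerM hornerXsubC -/(bp m) IH ?(ltnW hm) //.
by rewrite ffactnSr natrM natrB // ltnW.
Qed.

Lemma bp_eval0 m : (0 < m)%N -> (bp m).[0] = 0.
Proof.
case: m => [|m] // _; rewrite /bp big_ord_recl hornerM hornerXsubC /=.
by rewrite subrr mul0r.
Qed.

Lemma max_le (J : seq nat) m : all (fun x => x < m)%N J -> (\max_(i <- J) i <= m)%N.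
Proof.
elim: J => [|x J IH] /=; first by rewrite big_nil.
by case/andP => h1 h2; rewrite big_cons geq_max (ltnW h1) IH.
Qed.

Lemma base_count n : (0 < n)%N -> des_count [::] n = 1%N.
Proof.
move=> n0; rewrite des_countE.
have := core [::] (leq0n n); rewrite bin0 mul1n.
have -> : count (fun u => desw u == [::]) (permutations (iota 0 0)) = 1%N by [].
move=> <-; apply: eq_count => w /=.
by rewrite take0 drop0.
Qed.


Unset Implicit Arguments.

Theorem lemma3p8 (I : seq nat) (hI : sorted ltn I) (hpos : all (fun i => 0 < i)%N I) :
  exists p : {poly rat},
    (forall n : nat, (maxI I < n)%N -> p.[n%:R] = (des_count I n)%:R) /\
    p.[0] = (-1) ^+ size I.
Proof.
elim/last_ind: I hI hpos => [|I' m IH] hI hpos.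
  exists 1; split; last by rewrite hornerC expr0.
  by move=> n; rewrite /maxI big_nil => hn; rewrite hornerC base_count.
have sI' : sorted ltn I'.
  by apply: (subseq_sorted ltn_trans _ hI); rewrite -cats1 prefix_subseq.
move: hpos; rewrite all_rcons => /andP[m0 hpos'].
have [p' [Hp' Hp'0]] := IH sI' hpos'.
have Jlt := sorted_rcons_lt hI.
have mI' : (maxI I' <= m)%N by apply: max_le.
have mI : maxI (rcons I' m) = m.
  by rewrite /maxI big_rcons /= -/(maxI I'); apply/maxn_idPr.
set G := count (fun u => desw u == I') (permutations (iota 0 m)).
exists ((G%:R / (m`!)%:R) *: bp m - p'); split; last first.
  rewrite hornerD hornerN hornerZ bp_eval0 // mulr0 add0r Hp'0 size_rcons.
  by rewrite exprS mulN1r.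
move=> n; rewrite mI => hn.
rewrite hornerD hornerN hornerZ bp_eval ?(ltnW hn) // Hp'; last exact: leq_ltn_trans mI' hn.
rewrite !des_countE.
set W := permutations (iota 0 n).
have key : (count (fun w => desw w == rcons I' m) W + count (fun w => desw w == I') W
   = 'C(n, m) * G)%N.
  rewrite -core ?(ltnW hn) // -count_predUI.
  have -> : count (predI (fun w => desw w == rcons I' m) (fun w => desw w == I')) W = 0%N.
    rewrite (@eq_count _ _ pred0) ?count_pred0 // => w /=.
    by case: eqP => // ->; apply/negbTE/eqP => /(congr1 size) /eqP; rewrite size_rcons eq_sym ltn_eqF.
  rewrite addn0; apply: eq_in_count => w; rewrite /W mem_permutations => pw /=.
  apply: desw_split => //; rewrite m0 (perm_size pw) size_iota //.
rewrite -bin_ffact natrM mulrA mulrAC divfK; last by rewrite pnatr_eq0 -lt0n fact_gt0.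
by rewrite -natrM mulnC -key natrD addrK.
Qed.
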